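(* Let $\mathbf{X}$ be an $N$-sgrp over $\mathbb{R}^d$ on $[0,T]$ and $(f_1,\dots,f_d)$ smooth vector fields on $\mathbb{R}^e$ with bounded derivatives of all orders. A path $Y:[0,T]\to\mathbb{R}^e$ is a solution of the differential equation driven by $\mathbf{X}$ with vector fields $(f_1,\dots,f_d)$ if and only if for all $s,t\in[0,T]$ $$Y_t-Y_s=\sum_{1\le|w|\le N}f_w(Y_s)\langle\mathbf{X}_{s,t},w\rangle+r_{s,t},$$ where $\mathbf{X}_{s,t}=\mathbf{X}_s^{-1}\otimes_N\mathbf{X}_t$ and $r_{s,t}=o(|t-s|)$ as $t\to s$.
   Context: Fix $T>0$, $d,e\ge1$. $T^N(\mathbb{R}^d)$: span of words $w$ in letters $\{1,\dots,d\}$ of length $|w|\le N$ (incl. empty word $\mathbf{1}$), with truncated concatenation product $\otimes_N$; $\langle\mathbf{x},w\rangle$ is the coefficient of $w$ in $\mathbf{x}$. Shuffle product: bilinear, unit $\mathbf{1}$, $wi\sqcup\!\sqcup vj=(w\sqcup\!\sqcup vj)i+(wi\sqcup\!\sqcup v)j$. An $N$-sgrp is a non-zero path $\mathbf{X}:[0,T]\to T^N(\mathbb{R}^d)$ with $\langle\mathbf{X}_t,v\sqcup\!\sqcup w\rangle=\langle\mathbf{X}_t,v\rangle\langle\mathbf{X}_t,w\rangle$ for all $t$ and words with $|v|+|w|\le N$, and with $t\mapsto\langle\mathbf{X}_t,w\rangle$ smooth for $|w|\le N$ (then $\langle\mathbf{X}_t,\mathbf{1}\rangle=1$ and $\mathbf{X}_t$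 is $\otimes_N$-invertible). Its diagonal derivative is $\dot{\mathbf{X}}_{s,s}=\partial_t|_{t=s}\mathbf{X}_{s,t}$ with $\mathbf{X}_{s,t}=\mathbf{X}_s^{-1}\otimes_N\mathbf{X}_t$. For vector fields $f=f^i\partial_i$, $g=g^j\partial_j$ on $\mathbb{R}^e$ let $f\vartriangleright g:=f^i(\partial_ig^j)\partial_j$. Set $f_{\mathbf{1}}=\mathrm{id}$ and for $w=\ell_1\cdots\ell_n$, $n\ge1$, $f_w:=f_{\ell_1}\vartriangleright(\cdots\vartriangleright(f_{\ell_{n-1}}\vartriangleright f_{\ell_n})\cdots)$. A smooth path $Y$ is a solution of the differential equation driven by $\mathbf{X}$ with vector fields $(f_1,\dots,f_d)$ if $\dot Y_s=\sum_{|w|\le N}f_w(Y_s)\langle\dot{\mathbf{X}}_{s,s},w\rangle$ for all $s$ (note $\langle\dot{\mathbf{X}}_{s,s},\mathbf{1}\rangle=0$). *)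

(* Defs.v *)
From HB Require Import structures.
From mathcomp Require Import all_boot all_order all_algebra.
From mathcomp Require Import all_classical all_reals all_analysis.
Set Implicit Arguments. Unset Strict Implicit. Unset Printing Implicit Defensive.
Import Order.TTheory GRing.Theory Num.Theory.
Import numFieldNormedType.Exports.
Local Open Scope classical_set_scope.
Local Open Scope ring_scope.

Section Defs.
Variable R : realType.

(* Letters {1,..,d} are modelled by 'I_d; words by seq 'I_d.
   An element of T^N(R^d) is given by its coefficients x : seq 'I_d -> R,
   only the coefficients of words of length <= N being meaningful. *)
Definition tens (d : nat) := seq 'I_d -> R.

Definition tunit d : tens d := fun w => if w is [::] then 1 else 0.

Definition tmul d (N : nat) (x y : tens d) : tens d := fun w =>
  if (size w <= N)%N then \sum_(0 <= i < (size w).+1) x (take i w) * y (drop i w)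
  else 0.

Fixpoint tpow d N (x : tens d) (k : nat) : tens d :=
  if k is k'.+1 then tmul N x (tpow N x k') else @tunit d.

(* inverse in T^N of an element with unit constant coefficient:
   x^{-1} = sum_{k=0}^N (1 - x)^{(x)_N k} *)
Definition tinv d N (x : tens d) : tens d := fun w =>
  \sum_(0 <= k < N.+1) tpow N (fun u => @tunit d u - x u) k w.

(* shuffle product of words, as the list (with multiplicity) of words
   occurring in it.  shr works on reversed words and implements
   wi ⧢ vj = (w ⧢ vj) i + (wi ⧢ v) j. *)
Fixpoint shr d (a : seq 'I_d) : seq 'I_d -> seq (seq 'I_d) :=
  fun b => match a with
  | [::] => [:: b]
  | i :: a' =>
      let fix shr2 (b : seq 'I_d) : seq (seq 'I_d) :=
        match b with
        | [::] => [:: a]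
        | j :: b' => map (cons i) (shr a' b) ++ map (cons j) (shr2 b')
        end in shr2 b
  end.

Definition shuffle d (w v : seq 'I_d) : seq (seq 'I_d) :=
  map (@rev _) (shr (rev w) (rev v)).

Definition coef_shuffle d (x : tens d) (w v : seq 'I_d) : R :=
  \sum_(u <- shuffle w v) x u.

Definition I0T (T : R) : set R := [set t | 0 <= t <= T].

Definition derivw (V : normedModType R) (T : R) (f : R -> V) (t : R) (l : V) :=
  (fun h : R => h^-1 *: (f (t + h) - f t)) @ within [set h | 0 <= t + h <= T] (0 : R)^'
    --> l.

Definition smooth_on (V : normedModType R) (T : R) (f : R -> V) :=
  exists D : nat -> R -> V,
    (forall t, I0T T t -> D 0%N t = f t) /\
    (forall n t, I0T T t -> derivw T (D n) t (D n.+1 t)).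

Definition sgrp (T : R) (d N : nat) (X : R -> tens d) :=
  (forall t, I0T T t -> exists w : seq 'I_d, (size w <= N)%N /\ X t w != 0) /\
  (forall t, I0T T t -> forall v w : seq 'I_d, (size v + size w <= N)%N ->
      coef_shuffle (X t) v w = X t v * X t w) /\
  (forall w : seq 'I_d, (size w <= N)%N -> smooth_on T (fun t => X t w)).

Definition Xinc d N (X : R -> tens d) (s t : R) : tens d :=
  tmul N (tinv N (X s)) (X t).

Definition Xdot d N (T : R) (X : R -> tens d) (s : R) (w : seq 'I_d) : R :=
  lim ((fun h : R => h^-1 * (Xinc N X s (s + h) w - Xinc N X s s w))
         @ within [set h | 0 <= s + h <= T] (0 : R)^').

Definition vf (e : nat) := 'rV[R]_e -> 'rV[R]_e.

Definition vf_act e (f g : vf e) : vf e := fun y => 'D_(f y) g y.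

Fixpoint fword d e (f : 'I_d -> vf e) (w : seq 'I_d) : vf e :=
  match w with
  | [::] => id
  | [:: l] => f l
  | l :: w' => vf_act (f l) (fword f w')
  end.

Fixpoint Dn e (g : vf e) (vs : seq 'rV[R]_e) : vf e :=
  match vs with
  | [::] => g
  | v :: vs' => fun y => 'D_v (Dn g vs') y
  end.

Definition smooth_bdd e (g : vf e) :=
  (forall (vs : seq 'rV[R]_e) (y : 'rV[R]_e), differentiable (Dn g vs) y) /\
  (forall n : nat, (0 < n)%N -> exists C : R, forall (vs : seq 'rV[R]_e) (y : 'rV[R]_e),
      size vs = n -> (forall v, v \in vs -> `|v| <= 1) -> `|Dn g vs y| <= C).

Definition rde_solution d e N (T : R) (X : R -> tens d) (f : 'I_d -> vf e)
    (Y : R -> 'rV[R]_e) :=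
  smooth_on T Y /\
  forall s, I0T T s ->
    derivw T Y s (\sum_(0 <= k < N.+1) \sum_(w : k.-tuple 'I_d)
                     Xdot N T X s w *: fword f w (Y s)).

End Defs.

(* Main.v *)
Require Import Defs.
From HB Require Import structures.
From mathcomp Require Import all_boot all_order all_algebra.
From mathcomp Require Import all_classical all_reals all_analysis.
From mathcomp Require Import zify ring lra.
Set Implicit Arguments. Unset Strict Implicit. Unset Printing Implicit Defensive.
Import Order.TTheory GRing.Theory Num.Theory.
Import numFieldNormedType.Exports.
Local Open Scope classical_set_scope.
Local Open Scope ring_scope.

Local Notation Fw T t := (within [set h | (0 <= t + h <= T)%R] (0%R)^').
Section Alg.
Variables (R : realType) (d N : nat).
Implicit Types (x y z : tens R d) (w u : seq 'I_d).

Lemma tmulE x y w : (size w <= N)%N ->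
  tmul N x y w = \sum_(0 <= i < (size w).+1) x (take i w) * y (drop i w).
Proof. by rewrite /tmul => ->. Qed.

Lemma tmul_big x y w : (N < size w)%N -> tmul N x y w = 0.
Proof. by rewrite /tmul ltnNge => /negbTE ->. Qed.

Lemma tmul_assoc x y z w :
  tmul N (tmul N x y) z w = tmul N x (tmul N y z) w.
Proof.
case: (leqP (size w) N) => hw; last by rewrite !tmul_big.
rewrite !tmulE //.
set n := size w.
pose F i j := x (take i w) * y (take (j - i) (drop i w)) * z (drop j w).
have e1 : forall j, (0 <= j < n.+1)%N ->
  tmul N x y (take j w) * z (drop j w) =
  \sum_(0 <= i < n.+1 | (i <= j)%N) F i j.
  move=> j /andP[_ hj]; rewrite tmulE; last by rewrite size_take; case: ifP => // _; lia.
  rewrite size_take; have -> : (if (j < size w)%N then j else size w) = j.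
    by case: ifP => //; rewrite -/n; lia.
  rewrite mulr_suml (big_nat_widen _ _ _ _ _ (_ : j.+1 <= n.+1)%N) //.
  apply: eq_bigr => i /andP[_ hi].
  by rewrite /F take_takel // take_drop subnK.
have e2 : forall i, (0 <= i < n.+1)%N ->
  x (take i w) * tmul N y z (drop i w) =
  \sum_(0 <= j < n.+1 | (i <= j)%N) F i j.
  move=> i /andP[_ hi]; rewrite tmulE; last by rewrite size_drop; lia.
  rewrite mulr_sumr.
  rewrite -[RHS]/(\sum_(0 <= j < n.+1 | true && (i <= j)%N) F i j).
  rewrite -big_nat_widenl //.
  transitivity (\sum_(0 + i <= j < n.+1) F i j); last by rewrite add0n.
  rewrite big_addn size_drop -/n.
  have -> : (n.+1 - i = (n - i).+1)%N by lia.
  apply: eq_bigr => k _; rewrite /F addnK drop_drop mulrA.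
  by rewrite take_drop.
rewrite (eq_big_nat _ _ e1) (eq_big_nat _ _ e2).
under eq_bigr do rewrite big_mkcond.
under [RHS]eq_bigr do rewrite big_mkcond.
by rewrite exchange_big_nat.
Qed.

Lemma tmul1l y w : (size w <= N)%N -> tmul N (@tunit R d) y w = y w.
Proof.
move=> hw; rewrite tmulE // big_nat_recl // take0 drop0 /= mul1r.
case: w hw => [|a w'] hw; first by rewrite big_geq ?addr0.
by rewrite big1 ?addr0 // => i _ /=; rewrite mul0r.
Qed.

Lemma tmul1r y w : (size w <= N)%N -> tmul N y (@tunit R d) w = y w.
Proof.
move=> hw; rewrite tmulE // big_nat_recr // take_size drop_size /= mulr1.
rewrite big_nat_cond big1 ?add0r // => i /andP[/andP[_ hi] _].
case E: (drop i w) => [|b l]; last by rewrite mulr0.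
by move: (congr1 size E); rewrite size_drop /=; lia.
Qed.

Lemma tmul1lr y w : tmul N (@tunit R d) y w = tmul N y (@tunit R d) w.
Proof.
case: (leqP (size w) N) => hw; last by rewrite !tmul_big.
by rewrite tmul1l // tmul1r.
Qed.

Lemma tmulBr x y z w :
  tmul N x (fun u => y u - z u) w = tmul N x y w - tmul N x z w.
Proof.
case: (leqP (size w) N) => hw; last by rewrite !tmul_big // subr0.
rewrite !tmulE // -sumrB; apply: eq_bigr => i _; by rewrite mulrBr.
Qed.

Lemma tmul_suml m (A : nat -> tens R d) y w :
  tmul N (fun u => \sum_(0 <= k < m) A k u) y w =
  \sum_(0 <= k < m) tmul N (A k) y w.
Proof.
case: (leqP (size w) N) => hw; last by rewrite tmul_big // big1 // => k _; rewrite tmul_big.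
rewrite tmulE //.
under eq_bigr do rewrite mulr_suml.
rewrite exchange_big_nat; apply: eq_bigr => k _; by rewrite tmulE.
Qed.

Lemma tpow_small y k w : y [::] = 0 -> (size w < k)%N -> tpow N y k w = 0.
Proof.
move=> y0; elim: k w => [|k IH] w //= hw.
case: (leqP (size w) N) => hN; last by rewrite tmul_big.
rewrite tmulE // big_nat_recl // take0 y0 mul0r add0r big_nat_cond big1 //.
move=> i /andP[/andP[_ hi] _].
by rewrite IH ?mulr0 // size_drop; lia.
Qed.

Lemma tpow_r y k w : tmul N (tpow N y k) y w = tpow N y k.+1 w.
Proof.
elim: k w => [|k IH] w /=; first by rewrite tmul1lr.
rewrite tmul_assoc; congr (tmul N y _ w).
by apply: funext => u; rewrite IH.
Qed.

Lemma tinv_mul x w : x [::] = 1 -> (size w <= N)%N ->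
  tmul N (tinv N x) x w = @tunit R d w.
Proof.
move=> x1 hw; set y := fun u => @tunit R d u - x u.
have y0 : y [::] = 0 by rewrite /y x1 /= subrr.
have hx : x = fun u => @tunit R d u - y u.
  by apply: funext => u; rewrite /y opprB addrC subrK.
rewrite [X in tmul N _ X]hx tmulBr tmul1r // /tinv tmul_suml -/y.
under [X in _ - X]eq_bigr do rewrite tpow_r.
rewrite [X in X - _]big_nat_recl // [X in _ - X]big_nat_recr //=.
rewrite opprD addrA addrK -[tmul N y (tpow N y N) w]/(tpow N y N.+1 w).
by rewrite tpow_small ?subr0 //; lia.
Qed.
End Alg.

Section Ana.
Variable R : realType.
Variable T : R.
Hypothesis T0 : 0 < T.

Lemma near_FwP (t : R) (P : R -> Prop) :
  (\forall h \near Fw T t, P h) <->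
  exists2 e : R, 0 < e & forall h, `|h| < e -> h != 0 -> 0 <= t + h <= T -> P h.
Proof.
rewrite near_withinE /dnbhs near_withinE -nbhs_nbhs_norm.
split.
  move=> [e e0 He]; exists e => // h he h0 hI.
  apply: He => //=; by rewrite sub0r normrN.
move=> [e e0 He]; exists e => // h /= he h0 hI.
apply: He => //; by move: he; rewrite sub0r normrN.
Qed.

Lemma Fw_proper t : I0T T t -> ProperFilter (Fw T t).
Proof.
move=> /andP[t0 tT]; apply: Build_ProperFilter_ex => P /near_FwP [e e0 He].
have [htT|htT] := ltP t T.
  pose m := Num.min e (T - t) / 2.
  have m1 : Num.min e (T - t) <= e by rewrite ge_min lexx.
  have m2 : Num.min e (T - t) <= T - t by rewrite ge_min lexx orbT.
  have m3 : 0 < Num.min e (T - t) by rewrite lt_min e0 subr_gt0.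
  exists m; apply: He.
  - rewrite ger0_norm /m; lra.
  - rewrite /m; apply/eqP; lra.
  - apply/andP; split; rewrite /m; lra.
pose m := Num.min e T / 2.
have m1 : Num.min e T <= e by rewrite ge_min lexx.
have m2 : Num.min e T <= T by rewrite ge_min lexx orbT.
have m3 : 0 < Num.min e T by rewrite lt_min e0 T0.
exists (- m); apply: He.
- rewrite normrN ger0_norm /m; lra.
- rewrite /m; apply/eqP; lra.
- apply/andP; split; rewrite /m; lra.
Qed.

Section V.
Variable V : normedModType R.
Implicit Types (f g : R -> V) (l : V).

Definition dvw f t := lim ((fun h => h^-1 *: (f (t + h) - f t)) @ Fw T t).

Lemma derivw_dvw f t l : I0T T t -> derivw T f t l -> dvw f t = l.
Proof. move=> It; have FP := Fw_proper It; exact: cvg_lim. Qed.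

Lemma derivw_ext f g t l : I0T T t -> (forall u, I0T T u -> f u = g u) ->
  derivw T f t l -> derivw T g t l.
Proof.
move=> It fg; rewrite /derivw; apply: cvg_trans; apply: near_eq_cvg.
apply/near_FwP; exists 1 => // h _ _ hI; by rewrite !fg.
Qed.

Lemma derivw_cst (c : V) t : derivw T (fun _ => c) t 0.
Proof.
rewrite /derivw; have -> : (fun h : R => h^-1 *: (c - c)) = fun _ => 0.
  by apply: funext => h; rewrite subrr scaler0.
exact: cvg_cst.
Qed.

Lemma derivwD f g t lf lg : derivw T f t lf -> derivw T g t lg ->
  derivw T (fun s => f s + g s) t (lf + lg).
Proof.
move=> hf hg; rewrite /derivw.
have -> : (fun h : R => h^-1 *: (f (t + h) + g (t + h) - (f t + g t))) =
  (fun h => h^-1 *: (f (t + h) - f t) + h^-1 *: (g (t + h) - g t)).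
  by apply: funext => h /=; rewrite -scalerDr; congr (_ *: _); rewrite opprD addrACA.
exact: cvgD.
Qed.

Lemma derivwN f t lf : derivw T f t lf -> derivw T (fun s => - f s) t (- lf).
Proof.
move=> hf; rewrite /derivw.
have -> : (fun h : R => h^-1 *: (- f (t + h) - - f t)) =
  (fun h => - (h^-1 *: (f (t + h) - f t))).
  by apply: funext => h /=; rewrite -scalerN opprB addrC opprK.
exact: cvgN.
Qed.

Lemma derivw_sum (I : Type) (r : seq I) (P : pred I) (F : I -> R -> V) (L : I -> V) t :
  (forall i, P i -> derivw T (F i) t (L i)) ->
  derivw T (fun s => \sum_(i <- r | P i) F i s) t (\sum_(i <- r | P i) L i).
Proof.
move=> H; elim: r => [|i r IH].
  rewrite big_nil.
  have -> : (fun s => \sum_(i <- [::] | P i) F i s) = fun _ => 0.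
    by apply: funext => s; rewrite big_nil.
  exact: derivw_cst.
rewrite big_cons.
have -> : (fun s => \sum_(j <- i :: r | P j) F j s) =
   fun s => if P i then F i s + \sum_(j <- r | P j) F j s else \sum_(j <- r | P j) F j s.
  by apply: funext => s; rewrite big_cons.
case Pi: (P i) => //; apply: derivwD => //; exact: H.
Qed.

Lemma derivw_cont f t l : derivw T f t l -> (fun h => f (t + h)) @ Fw T t --> f t.
Proof.
move=> hf.
have h0 : (fun h : R => h) @ Fw T t --> (0 : R).
  apply/cvgrPdist_lt => eps eps0; apply/near_FwP; exists eps => // h hh _ _.
  by rewrite sub0r normrN.
have hz : (fun h => h *: (h^-1 *: (f (t + h) - f t))) @ Fw T t --> 0.
  by rewrite -(scale0r l); apply: cvgZ.
have hs : (fun h => f t + h *: (h^-1 *: (f (t + h) - f t))) @ Fw T t --> f t.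
  by rewrite -[X in _ --> X]addr0; apply: cvgD => //; exact: cvg_cst.
apply: cvg_trans hs.
apply: near_eq_cvg; apply/near_FwP; exists 1 => // h _ h0' _.
by rewrite /= scalerA mulfV // scale1r addrC subrK.
Qed.

Lemma derivwZ (a : R -> R) f t la lf : derivw T a t la -> derivw T f t lf ->
  derivw T (fun s => a s *: f s) t (la *: f t + a t *: lf).
Proof.
move=> ha hf; rewrite /derivw.
have -> : (fun h : R => h^-1 *: (a (t + h) *: f (t + h) - a t *: f t)) =
  (fun h => (h^-1 *: (a (t + h) - a t)) *: f (t + h) + a t *: (h^-1 *: (f (t + h) - f t))).
  apply: funext => h /=; rewrite !scalerBr !scalerBl !scalerA.
  change (h^-1 *: a (t + h)) with (h^-1 * a (t + h)).
  change (h^-1 *: a t) with (h^-1 * a t).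
  by rewrite [a t / h]mulrC addrA subrK.
apply: cvgD; first exact: cvgZ (derivw_cont hf).
exact: cvgZ (cvg_cst _) hf.
Qed.

End V.

Lemma derivw_comp (U W : normedModType R) (Y : R -> U) (phi : U -> W) t l :
  derivw T Y t l -> differentiable phi (Y t) ->
  derivw T (fun s => phi (Y s)) t ('d phi (Y t) l).
Proof.
move=> hY hphi; set L := 'd phi (Y t).
have hL : continuous L by exact: diff_continuous.
have Eo : forall eps : R, 0 < eps -> \forall u \near (0 : U),
    `|phi (u + Y t) - (phi (Y t) + L u)| <= eps * `|u|.
  move=> eps e0; have /eqaddoP := diff_locally hphi.
  by move=> /(_ eps e0).
set u := fun h => Y (t + h) - Y t.
have ucvg : u @ Fw T t --> (0 : U).
  rewrite -(subrr (Y t)); apply: cvgB; [exact: derivw_cont hY|exact: cvg_cst].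
rewrite /derivw.
have -> : (fun h : R => h^-1 *: (phi (Y (t + h)) - phi (Y t))) =
  (fun h => h^-1 *: (phi (u h + Y t) - (phi (Y t) + L (u h))) + L (h^-1 *: u h)).
  apply: funext => h; rewrite linearZ /= /u subrK -scalerDr; congr (_ *: _).
  by rewrite opprD addrA subrK.
rewrite -[X in _ --> X]add0r; apply: cvgD; last first.
  have hY' := hY; rewrite /derivw in hY'.
  by rewrite /u; apply: (@cvg_comp _ _ _ _ _ _ _ _ hY' (hL l)).
apply/cvgrPdist_le => eps e0.
have qb : \forall h \near Fw T t, `|h^-1 *: u h| <= `|l| + 1.
  move/cvgrPdist_le : hY => /(_ 1 ltr01); apply: filterS => h hh.
  have := ler_normB l (l - h^-1 *: u h); rewrite subKr; move: hh; rewrite /u.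
  lra.
have l1 : 0 < `|l| + 1 by rewrite ltr_wpDl.
set e' := eps / (`|l| + 1).
have e'0 : 0 < e' by rewrite divr_gt0.
have ue := ucvg _ (Eo e' e'0).
apply: filterS2 qb ue => h qbh ueh.
rewrite sub0r normrN normrZ.
have h1 : 0 <= `|h^-1| by [].
have := ler_wpM2l h1 ueh.
rewrite mulrCA -normrZ => h2.
have h3 : e' * `|h^-1 *: u h| <= e' * (`|l| + 1) by rewrite ler_wpM2l // ltW.
have h4 : e' * (`|l| + 1) = eps by rewrite /e' mulfVK // gt_eqF.
rewrite -h4; apply: le_trans h2 _; by rewrite -normrZ.
Qed.

Section Cn.
Variable V : normedModType R.

Fixpoint Cn (n : nat) (f : R -> V) : Prop :=
  if n is m.+1 then exists g : R -> V,
    (forall t, I0T T t -> derivw T f t (g t)) /\ Cn m g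
  else True.

Lemma Cn_ext n f g : (forall u, I0T T u -> f u = g u) -> Cn n f -> Cn n g.
Proof.
case: n => [//|n] fg [p [hp cp]]; exists p; split => // t It.
exact: derivw_ext (hp t It).
Qed.

Lemma CnS n f : Cn n.+1 f -> Cn n f.
Proof.
elim: n f => [//|n IH] f [p [hp cp]]; exists p; split => //; exact: IH.
Qed.

Lemma CnW m n f : (m <= n)%N -> Cn n f -> Cn m f.
Proof.
move=> /subnK <-; elim: (n - m)%N => [//|k IH] h; apply: IH; exact: CnS.
Qed.

Lemma Cn_cst n (c : V) : Cn n (fun _ => c).
Proof.
elim: n c => [//|n IH] c; exists (fun _ => 0); split => //.
move=> t _; exact: derivw_cst.
Qed.

Lemma Cn_add n f g : Cn n f -> Cn n g -> Cn n (fun s => f s + g s).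
Proof.
elim: n f g => [//|n IH] f g [p [hp cp]] [q [hq cq]].
rewrite /=; exists (fun s => p s + q s); split; last exact: IH.
move=> t It; exact: derivwD (hp t It) (hq t It).
Qed.

Lemma Cn_opp n f : Cn n f -> Cn n (fun s => - f s).
Proof.
elim: n f => [//|n IH] f [p [hp cp]].
rewrite /=; exists (fun s => - p s); split; last exact: IH.
move=> t It; exact: derivwN (hp t It).
Qed.

Lemma Cn_sum n (I : Type) (r : seq I) (P : pred I) (F : I -> R -> V) :
  (forall i, P i -> Cn n (F i)) -> Cn n (fun s => \sum_(i <- r | P i) F i s).
Proof.
move=> H; elim: r => [|i r IH].
  apply: (Cn_ext (f := fun _ => 0)); last exact: Cn_cst.
  by move=> u _; rewrite big_nil.
have E : forall u, I0T T u -> (if P i then F i u + \sum_(j <- r | P j) F j u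
   else \sum_(j <- r | P j) F j u) = \sum_(j <- i :: r | P j) F j u.
  by move=> u _; rewrite big_cons.
apply: Cn_ext E _; case Pi: (P i) => //; apply: Cn_add => //; exact: H.
Qed.
End Cn.

Lemma Cn_scale (V : normedModType R) n (a : R -> R) (f : R -> V) :
  Cn n a -> Cn n f -> Cn n (fun s => a s *: f s).
Proof.
elim: n a f => [//|n IH] a f ha hf.
have ha' := CnS ha; have hf' := CnS hf.
case: ha => [p [hp cp]]; case: hf => [q [hq cq]].
rewrite /=; exists (fun s => p s *: f s + a s *: q s); split.
  move=> t It; exact: derivwZ (hp t It) (hq t It).
apply: Cn_add; exact: IH.
Qed.

Definition Sm (V : normedModType R) (f : R -> V) := forall n, Cn n f.

Lemma Sm_of_smooth (V : normedModType R) (f : R -> V) : smooth_on T f -> Sm f.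
Proof.
move=> [D [D0 HD]] n.
have H : forall n k, Cn n (D k).
  elim=> [//|m IH] k; exists (D k.+1); split => //; move=> t It; exact: HD.
apply: Cn_ext (H n 0%N) => u Iu; exact: D0.
Qed.

Lemma Sm_der (V : normedModType R) (f : R -> V) :
  Sm f -> (forall t, I0T T t -> derivw T f t (dvw f t)) /\ Sm (dvw f).
Proof.
move=> hf.
have key : forall n, exists p, (forall t, I0T T t -> derivw T f t (p t)) /\ Cn n p.
  by move=> n; case: (hf n.+1) => p [hp cp]; exists p.
split.
  move=> t It; case: (key 0%N) => p [hp _].
  have := derivw_dvw It (hp t It). move=> E. rewrite E; exact: hp.
move=> n; case: (key n) => p [hp cp]; apply: Cn_ext cp => u Iu.
have := derivw_dvw Iu (hp u Iu); move=> E; by rewrite E.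
Qed.

Lemma smooth_of_Sm (V : normedModType R) (f : R -> V) : Sm f -> smooth_on T f.
Proof.
move=> hf; pose D k := iter k (@dvw V) f.
have HD : forall k, Sm (D k).
  elim=> [//|k IH]; rewrite /D iterS; exact: (Sm_der IH).2.
exists D; split => // k t It; rewrite /D iterS; exact: (Sm_der (HD k)).1.
Qed.

Lemma Sm_cst (V : normedModType R) (c : V) : Sm (fun _ => c).
Proof. move=> n; exact: Cn_cst. Qed.
Lemma Sm_add (V : normedModType R) (f g : R -> V) : Sm f -> Sm g -> Sm (fun s => f s + g s).
Proof. move=> hf hg n; exact: Cn_add. Qed.
Lemma Sm_opp (V : normedModType R) (f : R -> V) : Sm f -> Sm (fun s => - f s).
Proof. move=> hf n; exact: Cn_opp. Qed.
Lemma Sm_scale (V : normedModType R) (a : R -> R) (f : R -> V) :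
  Sm a -> Sm f -> Sm (fun s => a s *: f s).
Proof. move=> ha hf n; exact: Cn_scale. Qed.
Lemma Sm_mul (a b : R -> R) : Sm a -> Sm b -> Sm (fun s => a s * b s).
Proof. move=> ha hb n; exact: (Cn_scale (V := R^o)). Qed.
Lemma Sm_sum (V : normedModType R) (I : Type) (r : seq I) (P : pred I) (F : I -> R -> V) :
  (forall i, P i -> Sm (F i)) -> Sm (fun s => \sum_(i <- r | P i) F i s).
Proof. move=> H n; apply: Cn_sum => i Pi; exact: H. Qed.
Lemma Sm_ext (V : normedModType R) (f g : R -> V) :
  (forall u, I0T T u -> f u = g u) -> Sm f -> Sm g.
Proof. move=> fg hf n; exact: Cn_ext (hf n). Qed.
End Ana.
Section Space.
Variables (R : realType) (e : nat).
Local Notation U := 'rV[R]_e.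

Lemma diff_coord (g : U -> U) y j : differentiable g y ->
  differentiable (fun z => g z 0 j) y.
Proof.
move=> dg; have := differentiable_comp dg (differentiable_coord (g y) 0 j).
by [].
Qed.

Lemma D_coord (g : U -> U) y u j : derivable g y u ->
  'D_u (fun z => g z 0 j) y = ('D_u g y) 0 j.
Proof.
move=> dg; rewrite /derive.
have -> : (fun h : R => h^-1 *: (((fun z => g z 0 j) \o shift y) (h *: u) - g y 0 j)) =
  (fun N : U => N 0 j) \o (fun h : R => h^-1 *: ((g \o shift y) (h *: u) - g y)).
  by apply: funext => h /=; rewrite !mxE.
have dg' : (fun h : R => h^-1 *: ((g \o shift y) (h *: u) - g y)) @ (0:R)^' --> 'D_u g y by exact: dg.
have := @cvg_comp _ _ _ _ _ _ _ _ dg' (@coord_continuous R 1 e 0 j _).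
move=> HH; exact: (cvg_lim _ HH).
Qed.

Lemma D_lin (phi : U -> R) y u : differentiable phi y ->
  'D_u phi y = \sum_(i < e) u 0 i * 'D_('e_i) phi y.
Proof.
move=> dphi; rewrite deriveE // {1}(row_sum_delta u) linear_sum.
apply: eq_bigr => i _; rewrite linearZ deriveE //.
Qed.

Definition good (P : (U -> R) -> Prop) :=
  forall phi, P phi -> (forall y, differentiable phi y) /\
    forall v, P (fun y => 'D_v phi y).

Definition S (phi : U -> R) := exists P, good P /\ P phi.

Lemma good_S : good S.
Proof.
move=> phi [P [gP Pphi]]; have [d1 d2] := gP _ Pphi; split => // v.
exists P; split => //; exact: d2.
Qed.

Lemma S_diff phi y : S phi -> differentiable phi y.
Proof. by move=> /good_S [] . Qed.

Lemma S_D phi v : S phi -> S (fun y => 'D_v phi y).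
Proof. by move=> /good_S [] _. Qed.

Lemma S_cst c : S (fun _ => c).
Proof.
exists (fun phi => exists c, phi = fun _ => c); split; last by exists c.
move=> _ [c' ->]; split.
  move=> y; exact: differentiable_cst.
move=> v; exists 0; apply: funext => y; exact: derive_cst.
Qed.

Inductive SP : (U -> R) -> Prop :=
| SP_S phi : S phi -> SP phi
| SP_add phi psi : SP phi -> SP psi -> SP (fun y => phi y + psi y)
| SP_mul phi psi : SP phi -> SP psi -> SP (fun y => phi y * psi y).

Lemma good_SP : good SP.
Proof.
move=> phi; elim.
- move=> {}phi hphi; split; first by move=> y; exact: S_diff.
  by move=> v; apply: SP_S; exact: S_D.
- move=> f g _ [df Df] _ [dg Dg]; split.
    move=> y; change (differentiable (f + g) y).
    exact: (differentiableD (df y) (dg y)).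
  move=> v.
  have -> : (fun y => 'D_v (fun y0 => f y0 + g y0) y) =
            (fun y => 'D_v f y + 'D_v g y).
    apply: funext => y.
    change ('D_v (f + g) y = 'D_v f y + 'D_v g y).
    exact: (deriveD (diff_derivable (v:=v) (df y)) (diff_derivable (v:=v) (dg y))).
  apply: SP_add; [exact: Df|exact: Dg].
- move=> f g Pf [df Df] Pg [dg Dg]; split.
    move=> y; change (differentiable (f * g) y).
    exact: (differentiableM (df y) (dg y)).
  move=> v.
  have -> : (fun y => 'D_v (fun y0 => f y0 * g y0) y) =
            (fun y => f y * 'D_v g y + g y * 'D_v f y).
    apply: funext => y.
    change ('D_v (f * g) y = f y *: 'D_v g y + g y *: 'D_v f y).
    exact: (deriveM (diff_derivable (v:=v) (df y)) (diff_derivable (v:=v) (dg y))).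
  by apply: SP_add; apply: SP_mul; first [assumption | exact: Dg | exact: Df].
Qed.

Lemma S_SP phi : SP phi -> S phi.
Proof. by move=> h; exists SP; split => //; exact: good_SP. Qed.

Lemma S_add f g : S f -> S g -> S (fun y => f y + g y).
Proof. by move=> hf hg; apply: S_SP; apply: SP_add; apply: SP_S. Qed.

Lemma S_mul f g : S f -> S g -> S (fun y => f y * g y).
Proof. by move=> hf hg; apply: S_SP; apply: SP_mul; apply: SP_S. Qed.

Lemma S_sum (I : Type) (r : seq I) (P : pred I) (F : I -> U -> R) :
  (forall i, P i -> S (F i)) -> S (fun y => \sum_(i <- r | P i) F i y).
Proof.
move=> H; elim: r => [|i r IH].
  have -> : (fun y => \sum_(i <- [::] | P i) F i y) = fun _ => 0.
    by apply: funext => y; rewrite big_nil.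
  exact: S_cst.
have -> : (fun y => \sum_(j <- i :: r | P j) F j y) =
   fun y => if P i then F i y + \sum_(j <- r | P j) F j y else \sum_(j <- r | P j) F j y.
  by apply: funext => y; rewrite big_cons.
case Pi: (P i) => //; apply: S_add => //; exact: H.
Qed.

Lemma S_coord j : S (fun y : U => y 0 j).
Proof.
exists (fun phi => phi = (fun y : U => y 0 j) \/ exists c, phi = fun _ => c).
split; last by left.
move=> _ [->|[c ->]]; split.
- move=> y; exact: differentiable_coord.
- move=> v; right; exists (v 0 j); apply: funext => y.
  have := D_coord j (@derivable_id _ _ y v); rewrite derive_id; exact.
- move=> y; exact: differentiable_cst.
- move=> v; right; exists 0; apply: funext => y; exact: derive_cst.
Qed.

Definition Sv (h : U -> U) := forall j, S (fun y => h y 0 j).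

Lemma Sv_diff h y : Sv h -> differentiable h y.
Proof.
move=> hS.
have -> : h = \sum_(j < e) (fun z => h z 0 j *: ('e_j : U)).
  apply: funext => z; rewrite fct_sumE; exact: row_sum_delta.
apply: differentiable_sum => j; apply: differentiableZl; exact: S_diff.
Qed.

Lemma Sv_act f g : Sv f -> Sv g -> Sv (vf_act f g).
Proof.
move=> hf hg j.
have -> : (fun y => vf_act f g y 0 j) =
  (fun y => \sum_(i < e) f y 0 i * 'D_('e_i) (fun z => g z 0 j) y).
  apply: funext => y; rewrite /vf_act -D_coord; last first.
    exact: diff_derivable (Sv_diff y hg).
  by apply: D_lin; exact: S_diff.
apply: S_sum => i _; apply: S_mul; [exact: hf|apply: S_D; exact: hg].
Qed.


Lemma Sv_fl (g : vf R e) : smooth_bdd g -> Sv g.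
Proof.
move=> [hd _] j.
exists (fun phi => exists vs, phi = fun y => Dn g vs y 0 j); split; last by exists [::].
move=> _ [vs ->]; split.
  move=> y; apply: diff_coord; exact: hd.
move=> v; exists (v :: vs); apply: funext => y /=.
rewrite D_coord //; exact: diff_derivable (hd vs y).
Qed.

Lemma Sv_fword d (f : 'I_d -> vf R e) : (forall i, smooth_bdd (f i)) ->
  forall w, Sv (fword f w).
Proof.
move=> hf; elim=> [|l w IH].
  move=> j; exact: S_coord.
case: w IH => [|l' w'] IH; first by apply: Sv_fl; exact: hf.
exact: Sv_act (Sv_fl (hf l)) IH.
Qed.
End Space.

Section XP.
Variables (R : realType) (T : R) (d N : nat) (X : R -> tens R d).
Hypothesis T0 : 0 < T.
Hypothesis hX : sgrp T N X.

Lemma sgrp_unit t : I0T T t -> X t [::] = 1.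
Proof.
move=> It; case: hX => [hnz [hsh _]].
case: (hnz t It) => w0 [hw0 nz].
have := hsh t It [::] w0 hw0.
rewrite /coef_shuffle /shuffle /= big_cons big_nil addr0 revK => E.
have : (X t [::] - 1) * X t w0 = 0 by rewrite mulrBl mul1r -E subrr.
by move/eqP; rewrite mulf_eq0 (negbTE nz) orbF subr_eq0 => /eqP.
Qed.

Lemma Xinc_ss s w : I0T T s -> (size w <= N)%N -> Xinc N X s s w = tunit R w.
Proof. move=> Is hw; rewrite /Xinc tinv_mul //; exact: sgrp_unit. Qed.

Lemma Sm_X u : (size u <= N)%N -> Sm T (fun t => X t u).
Proof. move=> hu; apply: Sm_of_smooth; exact: hX.2.2. Qed.

Lemma Sm_tpow k u : (size u <= N)%N ->
  Sm T (fun s => tpow N (fun v => tunit R v - X s v) k u).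
Proof.
elim: k u => [|k IH] u hu /=; first exact: Sm_cst.
have -> : (fun s => tmul N (fun v => tunit R v - X s v)
                      (tpow N (fun v => tunit R v - X s v) k) u) =
  (fun s => \sum_(0 <= i < (size u).+1) (tunit R (take i u) - X s (take i u)) *
       tpow N (fun v => tunit R v - X s v) k (drop i u)).
  by apply: funext => s; rewrite tmulE.
apply: Sm_sum => i _; apply: Sm_mul.
  apply: Sm_add; first exact: Sm_cst.
  apply: Sm_opp; apply: Sm_X; rewrite size_take; case: ifP => //; lia.
apply: IH; rewrite size_drop; lia.
Qed.

Lemma Sm_tinv u : (size u <= N)%N -> Sm T (fun s => tinv N (X s) u).
Proof. move=> hu; apply: Sm_sum => k _; exact: Sm_tpow. Qed.

Definition xd s w := \sum_(0 <= i < (size w).+1)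
   tinv N (X s) (take i w) * dvw T (fun t => X t (drop i w)) s.

Lemma Xinc_der s w : I0T T s -> (size w <= N)%N ->
  derivw T (fun t => Xinc N X s t w) s (xd s w).
Proof.
move=> Is hw.
have -> : (fun t => Xinc N X s t w) = (fun t => \sum_(0 <= i < (size w).+1)
   tinv N (X s) (take i w) *: X t (drop i w)).
  by apply: funext => t; rewrite /Xinc tmulE.
apply: derivw_sum => i _.
have := derivwZ (@derivw_cst _ T _ (tinv N (X s) (take i w)) s)
  ((Sm_der T0 (Sm_X (_ : (size (drop i w) <= N)%N))).1 s Is).
rewrite scale0r add0r; apply.
rewrite size_drop; lia.
Qed.

Lemma Xdot_xd s w : I0T T s -> (size w <= N)%N -> Xdot N T X s w = xd s w.
Proof.
move=> Is hw; rewrite -(derivw_dvw T0 Is (Xinc_der Is hw)); by [].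
Qed.

Lemma Xdot_der s w : I0T T s -> (size w <= N)%N ->
  derivw T (fun t => Xinc N X s t w) s (Xdot N T X s w).
Proof. move=> Is hw; rewrite Xdot_xd //; exact: Xinc_der. Qed.

Lemma Sm_Xdot w : (size w <= N)%N -> Sm T (fun s => Xdot N T X s w).
Proof.
move=> hw; apply: (Sm_ext (f := fun s => xd s w)).
  by move=> u Iu; rewrite Xdot_xd.
apply: Sm_sum => i _; apply: Sm_mul.
  apply: Sm_tinv; rewrite size_take; case: ifP => //; lia.
apply: (Sm_der T0 _).2; apply: Sm_X; rewrite size_drop; lia.
Qed.

Lemma Xdot_nil s : I0T T s -> Xdot N T X s [::] = 0.
Proof.
move=> Is; rewrite Xdot_xd // /xd big_nat1 take0 drop0.
have : derivw T (fun t => X t [::]) s 0.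
  have H := @derivw_cst _ T _ (1:R) s.
  apply: (@derivw_ext _ T _ (fun _ : R => (1:R)) _ s 0 Is _ H).
  by move=> u Iu; rewrite sgrp_unit.
by move/(derivw_dvw T0 Is) ->; rewrite mulr0.
Qed.
End XP.

Section Main.
Variables (R : realType) (T : R).
Hypothesis T0 : 0 < T.

Lemma near_IP (s : R) (P : R -> Prop) :
  (\forall t \near within (I0T T) (nbhs s), P t) <->
  exists2 e : R, 0 < e & forall t, `|t - s| < e -> I0T T t -> P t.
Proof.
rewrite near_withinE -nbhs_nbhs_norm.
split.
  move=> [e e0 He]; exists e => // t he hI.
  apply: He => //=; by rewrite distrC.
move=> [e e0 He]; exists e => // t /= he hI.
apply: He => //; by rewrite distrC.
Qed.

Section V.
Variable V : normedModType R.

Lemma derivw_sum_nat m n (F : nat -> R -> V) (L : nat -> V) t :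
  (forall i, (m <= i < n)%N -> derivw T (F i) t (L i)) ->
  derivw T (fun s => \sum_(m <= i < n) F i s) t (\sum_(m <= i < n) L i).
Proof.
move=> H.
have -> : (fun s => \sum_(m <= i < n) F i s) =
          (fun s => \sum_(m <= i < n | (m <= i < n)%N && true) F i s).
  by apply: funext => s; rewrite -big_nat_cond.
rewrite big_nat_cond; apply: derivw_sum => i /andP[hi _]; exact: H.
Qed.

Lemma Cn_sum_nat k m n (F : nat -> R -> V) :
  (forall i, (m <= i < n)%N -> Cn T k (F i)) ->
  Cn T k (fun s => \sum_(m <= i < n) F i s).
Proof.
move=> H.
have -> : (fun s => \sum_(m <= i < n) F i s) =
          (fun s => \sum_(m <= i < n | (m <= i < n)%N && true) F i s).
  by apply: funext => s; rewrite -big_nat_cond.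
apply: Cn_sum => i /andP[hi _]; exact: H.
Qed.

Lemma derivw0_near (phi : R -> V) s : I0T T s -> phi s = 0 -> derivw T phi s 0 ->
  forall eps : R, 0 < eps ->
  \forall t \near within (I0T T) (nbhs s), `|phi t| <= eps * `|t - s|.
Proof.
move=> Is p0 hd eps e0.
move/cvgrPdist_le : hd => /(_ eps e0) /near_FwP [del d0 Hd].
apply/near_IP; exists del => // t ht It.
have [->|ts] := eqVneq t s; first by rewrite p0 subrr !normr0 mulr0.
have h0 : t - s != 0 by rewrite subr_eq0.
have := Hd (t - s) ht h0; rewrite addrC subrK p0 subr0 sub0r normrN normrZ.
move=> /(_ It); rewrite normfV ler_pdivrMl ?normr_gt0 // mulrC; exact.
Qed.

Lemma near_derivw0 (phi : R -> V) s : I0T T s ->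
  (forall eps : R, 0 < eps ->
    \forall t \near within (I0T T) (nbhs s), `|phi t| <= eps * `|t - s|) ->
  phi s = 0 /\ derivw T phi s 0.
Proof.
move=> Is H.
have p0 : phi s = 0.
  have /near_IP [del d0 Hd] := H 1 ltr01.
  have := Hd s; rewrite subrr normr0 mulr0 => /(_ d0 Is).
  by rewrite normr_le0 => /eqP.
split => //; apply/cvgrPdist_le => eps e0.
have /near_IP [del d0 Hd] := H eps e0.
apply/near_FwP; exists del => // h hh h0 hI.
have := Hd (s + h); rewrite addrC addKr => /(_ hh hI) hp.
rewrite p0 subr0 sub0r normrN normrZ normfV ler_pdivrMl ?normr_gt0 // mulrC.
exact: hp.
Qed.
End V.
End Main.
Section Fin.
Variables (R : realType) (T : R) (d e N : nat).
Variables (X : R -> tens R d) (f : 'I_d -> vf R e) (Y : R -> 'rV[R]_e).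
Hypothesis T0 : 0 < T.
Hypothesis hX : sgrp T N X.
Hypothesis hf : forall i, smooth_bdd (f i).

Definition G s := \sum_(0 <= k < N.+1) \sum_(w : k.-tuple 'I_d)
                     Xdot N T X s w *: fword f w (Y s).
Definition Asum s := \sum_(1 <= k < N.+1) \sum_(w : k.-tuple 'I_d)
                     Xdot N T X s w *: fword f w (Y s).
Definition A s t := \sum_(1 <= k < N.+1) \sum_(w : k.-tuple 'I_d)
                     Xinc N X s t w *: fword f w (Y s).

Lemma G_Asum s : I0T T s -> G s = Asum s.
Proof.
move=> Is; rewrite /G /Asum big_ltn // big1 ?add0r // => w _.
have -> : (w : seq 'I_d) = [::] by apply: size0nil; rewrite size_tuple.
by rewrite (Xdot_nil T0 hX Is) scale0r.
Qed.

Lemma A_der s : I0T T s -> derivw T (A s) s (Asum s).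
Proof.
move=> Is; apply: derivw_sum_nat => k /andP[_ hk].
apply: derivw_sum => w _.
have hw : (size w <= N)%N by rewrite size_tuple.
have := derivwZ (Xdot_der T0 hX Is hw) (@derivw_cst _ T _ (fword f w (Y s)) s).
by rewrite scaler0 addr0.
Qed.

Lemma A_ss s : I0T T s -> A s s = 0.
Proof.
move=> Is; rewrite /A big_nat_cond big1 // => k /andP[/andP[hk1 hk2] _].
rewrite big1 // => w _.
have hw : (size w <= N)%N by rewrite size_tuple.
rewrite (Xinc_ss hX Is hw).
have : (tval w) != [::] by rewrite -size_eq0 size_tuple; lia.
by case: (tval w) => [|a l] //= _; rewrite scale0r.
Qed.

Section Smooth.
Hypothesis hY : forall s, I0T T s -> derivw T Y s (G s).

Lemma Pn n : forall (a : R -> R) (h : 'rV[R]_e -> R), Sm T a -> S h ->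
  Cn T n (fun s => a s * h (Y s)).
Proof.
elim: n => [//|n IH] a h ha hh.
have [da Sda] := Sm_der T0 ha.
exists (fun t => dvw T a t * h (Y t) +
  \sum_(i < e) \sum_(0 <= k < N.+1) \sum_(w : k.-tuple 'I_d)
     (a t * Xdot N T X t w) * (fword f w (Y t) 0 i * 'D_('e_i) h (Y t))).
split.
  move=> t It.
  have H1 := derivw_comp (hY It) (S_diff (Y t) hh).
  have H2 := derivwZ (da t It) H1.
  suff E : dvw T a t * h (Y t) + a t * 'd h (Y t) (G t) =
    dvw T a t * h (Y t) +
    \sum_(i < e) \sum_(0 <= k < N.+1) \sum_(w : k.-tuple 'I_d)
     (a t * Xdot N T X t w) * (fword f w (Y t) 0 i * 'D_('e_i) h (Y t)).
    by rewrite -E; exact: H2.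
  congr (_ + _).
  rewrite -deriveE; last exact: S_diff.
  rewrite (D_lin _ (S_diff _ hh)) mulr_sumr; apply: eq_bigr => i _.
  rewrite /G summxE mulr_suml mulr_sumr; apply: eq_bigr => k _.
  rewrite summxE mulr_suml mulr_sumr; apply: eq_bigr => w _.
  rewrite mxE; change (Xdot N T X t w *: fword f w (Y t) 0 i) with
    (Xdot N T X t w * fword f w (Y t) 0 i).
  ring.
apply: Cn_add; first exact: IH.
apply: Cn_sum => i _; apply: Cn_sum_nat => k /andP[_ hk]; apply: Cn_sum => w _.
have hw : (size w <= N)%N by rewrite size_tuple.
apply: (IH (fun t => a t * Xdot N T X t w)
           (fun y => fword f w y 0 i * 'D_('e_i) h y)).
  apply: Sm_mul => //; exact: Sm_Xdot.
apply: S_mul; first exact: Sv_fword.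
exact: S_D.
Qed.

Lemma Y_smooth : smooth_on T Y.
Proof.
apply: smooth_of_Sm => // n.
have -> : Y = fun s => \sum_(j < e) Y s 0 j *: ('e_j : 'rV[R]_e).
  by apply: funext => s; exact: row_sum_delta.
apply: Cn_sum => j _; apply: Cn_scale; last exact: Cn_cst.
apply: (Cn_ext (f := fun s => 1 * Y s 0 j)); first by move=> u _; rewrite mul1r.
apply: (@Pn n (fun _ => 1) (fun y => y 0 j)); [exact: Sm_cst | exact: S_coord].
Qed.
End Smooth.
End Fin.


Unset Implicit Arguments.
Theorem proposition2p20 (R : realType) (T : R) (d e N : nat)
    (X : R -> tens R d) (f : 'I_d -> vf R e) (Y : R -> 'rV[R]_e) :
  0 < T -> (0 < d)%N -> (0 < e)%N ->
  sgrp T N X ->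
  (forall i, smooth_bdd (f i)) ->
  rde_solution N T X f Y <->
  exists r : R -> R -> 'rV[R]_e,
    (forall s t, I0T T s -> I0T T t ->
       Y t - Y s = \sum_(1 <= k < N.+1) \sum_(w : k.-tuple 'I_d)
                     Xinc N X s t w *: fword f w (Y s) + r s t) /\
    (forall s, I0T T s -> forall eps : R, 0 < eps ->
       \forall t \near within (I0T T) (nbhs s), `|r s t| <= eps * `|t - s|).
Proof.
move=> T0 _ _ hX hf; split.
  move=> [smY hY].
  exists (fun s t => Y t - Y s - A N X f Y s t); split.
    by move=> s t _ _; rewrite /A [_ + (_ - _)]addrC subrK.
  move=> s Is eps e0; apply: derivw0_near => //.
    by rewrite subrr sub0r (A_ss f Y T0 hX Is) oppr0.
  have H := derivwD (derivwD (hY s Is) (derivwN (@derivw_cst _ T _ (Y s) s)))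
                    (derivwN (A_der (f:=f) (Y:=Y) T0 hX Is)).
  suff E : (0 : 'rV[R]_e) = G T N X f Y s + - 0 + - Asum T N X f Y s.
    by rewrite E; exact: H.
  by rewrite (G_Asum f Y T0 hX) // oppr0 addr0 subrr.
move=> [r [H1 H2]].
have hD : forall s, I0T T s -> derivw T Y s (G T N X f Y s).
  move=> s Is; have [r0 hr] := near_derivw0 Is (H2 s Is).
  have H := derivwD (@derivw_cst _ T _ (Y s) s) (derivwD (A_der (f:=f) (Y:=Y) T0 hX Is) hr).
  rewrite (G_Asum f Y T0 hX) //.
  have E : Asum T N X f Y s = 0 + (Asum T N X f Y s + 0) by rewrite add0r addr0.
  rewrite E; apply: (derivw_ext Is _ H) => u Iu.
  by rewrite /A -(H1 s u Is Iu) addrC subrK.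
split; last exact: hD.
exact: (Y_smooth T0 hX hf hD).
Qed.
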